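(* Let $\widetilde\nabla$ be the canonical snm-connection on $\mathbb R^3$ determined by $\mathsf C=\partial_z$, and let $M$ be the rotational surface $\psi(s,t)=(x(s)\cos t,x(s)\sin t,z(s))$, $s\in I$, $t\in\mathbb R$, with $I$ an open interval, $x>0$, $x'^2+z'^2=1$. If the generating curve $s\mapsto(x(s),z(s))$ is an arc of a circle, i.e. $(x(s),z(s))=(c_1,c_2)+r(\cos(s/r),\sin(s/r))$ for constants $c_1,c_2\in\mathbb R$, $r>0$, then the sectional curvature $K$ of $M$ with respect to $\widetilde\nabla$ is not constant.
   Context: Let $\langle\cdot,\cdot\rangle$ be the Euclidean metric on $\mathbb R^3$ and $\widetilde\nabla^0$ its Levi-Civita connection (the ordinary directional derivative). Given a smooth vector field $\mathsf C$ on $\mathbb R^3$, the semi-symmetric non-metric connection (snm-connection) determined by $\mathsf C$ is $\widetilde\nabla_XY=\widetilde\nabla^0_XY+\langle \mathsf C,Y\rangle X$. Its curvature tensor is $\widetilde R(X,Y)Z=\widetilde\nabla_X\widetilde\nabla_YZ-\widetilde\nabla_Y\widetilde\nabla_XZ-\widetilde\nabla_{[X,Y]}Z$. For a surface $M$ immersed in $\mathbb R^3$, the induced connection is $\nabla_XY=(\widetilde\nabla_XY)^{\top}$ (tangential component), with curvature tensor $R$ defined by the same formula, and the sectional curvature of $M$ with respect to $\widetilde\nabla$ at $p$ is $K(p)=\frac12\big(\langle R(e_1,e_2)e_2,e_1\rangle+\langle R(e_2,e_1)e_1,e_2\rangle\big)$ for an orthonormal basis $\{e_1,e_2\}$ of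 $T_pM$. *)

(* Defs.v *)
From Stdlib Require Import Reals.
From Coquelicot Require Import Coquelicot.
Open Scope R_scope.

Definition V3 : Type := (R * R * R)%type.
Definition v1 (v : V3) : R := fst (fst v).
Definition v2 (v : V3) : R := snd (fst v).
Definition v3 (v : V3) : R := snd v.
Definition mkV (a b c : R) : V3 := (a, b, c).
Definition vadd (u v : V3) : V3 := mkV (v1 u + v1 v) (v2 u + v2 v) (v3 u + v3 v).
Definition vscal (k : R) (v : V3) : V3 := mkV (k * v1 v) (k * v2 v) (k * v3 v).
Definition vsub (u v : V3) : V3 := vadd u (vscal (-1) v).
Definition dot (u v : V3) : R := v1 u * v1 v + v2 u * v2 v + v3 u * v3 v.
Definition cross (u v : V3) : V3 :=
  mkV (v2 u * v3 v - v3 u * v2 v) (v3 u * v1 v - v1 u * v3 v) (v1 u * v2 v - v2 u * v1 v).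

(* The vector field C = d/dz determining the snm-connection. *)
Definition Cz : V3 := mkV 0 0 1.

Definition sfun := R -> R -> R.
Definition vfun := R -> R -> V3.

Definition ds (f : sfun) : sfun := fun s t => Derive (fun u => f u t) s.
Definition dt (f : sfun) : sfun := fun s t => Derive (fun u => f s u) t.
Definition dsV (F : vfun) : vfun := fun s t =>
  mkV (ds (fun a b => v1 (F a b)) s t) (ds (fun a b => v2 (F a b)) s t)
      (ds (fun a b => v3 (F a b)) s t).
Definition dtV (F : vfun) : vfun := fun s t =>
  mkV (dt (fun a b => v1 (F a b)) s t) (dt (fun a b => v2 (F a b)) s t)
      (dt (fun a b => v3 (F a b)) s t).

Section Surface.
Variables x z : R -> R.

Definition psi : vfun := fun s t => mkV (x s * cos t) (x s * sin t) (z s).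
Definition psi_s : vfun := dsV psi.
Definition psi_t : vfun := dtV psi.

Definition nrm : vfun := fun s t => cross (psi_s s t) (psi_t s t).
Definition tang (s t : R) (v : V3) : V3 :=
  vsub v (vscal (dot v (nrm s t) / dot (nrm s t) (nrm s t)) (nrm s t)).

(* A tangent vector field X on M, given by its coordinate components
   (a, b) : X = a psi_s + b psi_t. *)
Definition tfield := (sfun * sfun)%type.
Definition fieldV (X : tfield) : vfun := fun s t =>
  vadd (vscal (fst X s t) (psi_s s t)) (vscal (snd X s t) (psi_t s t)).
Definition derX (X : tfield) (f : sfun) : sfun := fun s t =>
  fst X s t * ds f s t + snd X s t * dt f s t.
Definition derXV (X : tfield) (F : vfun) : vfun := fun s t =>
  vadd (vscal (fst X s t) (dsV F s t)) (vscal (snd X s t) (dtV F s t)).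
Definition bracket (X Y : tfield) : tfield :=
  ((fun s t => derX X (fst Y) s t - derX Y (fst X) s t),
   (fun s t => derX X (snd Y) s t - derX Y (snd X) s t)).

Definition nabla (X : tfield) (Y : vfun) : vfun := fun s t =>
  tang s t (vadd (derXV X Y s t) (vscal (dot Cz (Y s t)) (fieldV X s t))).

Definition Rcurv (X Y Z : tfield) : vfun := fun s t =>
  vsub (vsub (nabla X (nabla Y (fieldV Z)) s t) (nabla Y (nabla X (fieldV Z)) s t))
       (nabla (bracket X Y) (fieldV Z) s t).

(* orthonormal frame e1 = psi_s, e2 = psi_t / x  (orthonormal when
   x > 0 and x'^2 + z'^2 = 1) *)
Definition e1 : tfield := ((fun _ _ => 1), (fun _ _ => 0)).
Definition e2 : tfield := ((fun _ _ => 0), (fun s _ => / x s)).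

Definition sect_curv (s t : R) : R :=
  / 2 * (dot (Rcurv e1 e2 e2 s t) (fieldV e1 s t)
         + dot (Rcurv e2 e1 e1 s t) (fieldV e2 s t)).
End Surface.

(* Main.v *)
Require Import Defs.
From Stdlib Require Import Reals Nsatz Lra.
From Coquelicot Require Import Coquelicot.
Open Scope R_scope.

Lemma vext (u v : V3) : v1 u = v1 v -> v2 u = v2 v -> v3 u = v3 v -> u = v.
Proof. destruct u as [[u1 u2] u3], v as [[w1 w2] w3]; unfold v1, v2, v3; simpl; intros; subst; reflexivity. Qed.

Ltac vsimp := unfold vsub, vadd, vscal, dot, cross, mkV, v1, v2, v3 in *; cbn [fst snd] in *.

Lemma trigt t : cos t ^ 2 + sin t ^ 2 = 1.
Proof. rewrite <- (sin2_cos2 t). unfold Rsqr. ring. Qed.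
Section S.
Variables (a b : Rbar) (x z : R -> R) (c1 c2 r : R).
Hypothesis Hr : 0 < r.
Definition II (u : R) := Rbar_lt a u /\ Rbar_lt u b.
Definition ct (u : R) := cos (u / r).
Definition st (u : R) := sin (u / r).
Definition XX (u : R) := c1 + r * ct u.
Hypothesis Hx : forall s : R, Rbar_lt a s -> Rbar_lt s b ->
     x s = c1 + r * cos (s / r) /\ z s = c2 + r * sin (s / r) /\ 0 < x s.

Definition E1 (u t : R) : V3 := mkV (- st u * cos t) (- st u * sin t) (ct u).
Definition E2 (t : R) : V3 := mkV (- sin t) (cos t) 0.
Definition NN (u t : R) : V3 := mkV (ct u * cos t) (ct u * sin t) (st u).
Definition comb (f g : R -> R) (u t : R) : V3 := vadd (vscal (f u) (E1 u t)) (vscal (g u) (E2 t)).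

Lemma xI u : II u -> x u = XX u. Proof. intros [h1 h2]. apply (Hx u h1 h2). Qed.
Lemma zI u : II u -> z u = c2 + r * st u. Proof. intros [h1 h2]. apply (Hx u h1 h2). Qed.
Lemma xpos u : II u -> 0 < XX u. Proof. intros H. rewrite <- xI by auto. destruct H as [h1 h2]. apply (Hx u h1 h2). Qed.
Lemma trig u : ct u ^ 2 + st u ^ 2 = 1.
Proof. unfold ct, st. rewrite <- (sin2_cos2 (u/r)). unfold Rsqr. ring. Qed.

Lemma Dloc (f g : R -> R) s l : II s -> (forall u, II u -> f u = g u) -> is_derive g s l -> Derive f s = l.
Proof.
  intros Hs Heq Hd. rewrite (Derive_ext_loc f g). now apply is_derive_unique.
  apply (locally_open II). apply open_and; [apply open_Rbar_gt|apply open_Rbar_lt].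
  exact Heq. exact Hs.
Qed.

Lemma d_ct u : is_derive ct u (- st u / r).
Proof. unfold ct, st. auto_derive; auto. unfold Rdiv; ring. Qed.
Lemma d_st u : is_derive st u (ct u / r).
Proof. unfold ct, st. auto_derive; auto. unfold Rdiv; ring. Qed.
Lemma d_XX u : is_derive XX u (- st u).
Proof. unfold XX, ct, st. auto_derive; auto. unfold Rdiv. cut (r * (1 * / r * - sin (u * / r)) = - sin (u * / r)). auto. field. lra. Qed.
Ltac toR := match goal with |- @eq _ ?A ?B => change (@eq R A B) end; change RinvImpl.Rinv with Rinv.
Ltac lc k H := match type of H with ?A = ?B => match goal with |- ?L = ?R =>
  let H0 := fresh in assert (H0 : A - B = 0) by (rewrite H; ring);
  transitivity (R + k * (A - B)); [ring | rewrite H0; ring] end end.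
Ltac lc2 k1 H1 k2 H2 := match type of H1 with ?A1 = ?B1 => match type of H2 with ?A2 = ?B2 => match goal with |- ?L = ?R =>
  let H0 := fresh in let H3 := fresh in assert (H0 : A1 - B1 = 0) by (rewrite H1; ring);
  assert (H3 : A2 - B2 = 0) by (rewrite H2; ring);
  transitivity (R + k1 * (A1 - B1) + k2 * (A2 - B2)); [ring | rewrite H0, H3; ring] end end end.
Ltac fr := toR; unfold Rdiv in *; field; lra.

Lemma psi_s_eq u t : II u -> psi_s x z u t = E1 u t.
Proof.
  intros Hu. unfold psi_s, dsV, ds, psi, E1. apply vext; vsimp.
  - apply (Dloc _ (fun w => XX w * cos t)); auto.
    intros w Hw; now rewrite xI. unfold XX, ct, st. auto_derive; auto. fr.
  - apply (Dloc _ (fun w => XX w * sin t)); auto.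
    intros w Hw; now rewrite xI. unfold XX, ct, st. auto_derive; auto. fr.
  - apply (Dloc _ (fun w => c2 + r * st w)); auto.
    intros w Hw; now rewrite zI. unfold ct, st. auto_derive; auto. fr.
Qed.

Lemma psi_t_eq u t : psi_t x z u t = mkV (- x u * sin t) (x u * cos t) 0.
Proof.
  unfold psi_t, dtV, dt, psi. apply vext; vsimp.
  - apply is_derive_unique. auto_derive; auto. toR; ring.
  - apply is_derive_unique. auto_derive; auto. toR; ring.
  - apply Derive_const.
Qed.


Lemma nrm_eq u t : II u -> nrm x z u t = vscal (- XX u) (NN u t).
Proof.
  intros Hu. unfold nrm. rewrite psi_s_eq, psi_t_eq, xI by auto.
  unfold E1, NN. pose proof (trigt t). apply vext; vsimp.
  - ring. - ring.
  - lc (- XX u * st u) H.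
Qed.

Lemma tang_eq u t v : II u -> tang x z u t v = vsub v (vscal (dot v (NN u t)) (NN u t)).
Proof.
  intros Hu. unfold tang. rewrite nrm_eq by auto.
  pose proof (xpos u Hu). pose proof (trigt t) as T1. pose proof (trig u) as T2.
  assert (HN : dot (vscal (- XX u) (NN u t)) (vscal (- XX u) (NN u t)) = XX u ^ 2).
  { unfold NN; vsimp. lc2 (XX u ^ 2 * ct u ^ 2) T1 (XX u ^ 2) T2. }
  rewrite HN. unfold NN. apply vext; vsimp; field; lra.
Qed.

Lemma proj_lem al be ga u t :
  vsub (vadd (vadd (vscal al (E1 u t)) (vscal be (E2 t))) (vscal ga (NN u t)))
       (vscal (dot (vadd (vadd (vscal al (E1 u t)) (vscal be (E2 t))) (vscal ga (NN u t))) (NN u t)) (NN u t))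
  = vadd (vscal al (E1 u t)) (vscal be (E2 t)).
Proof.
  pose proof (trigt t) as T1. pose proof (trig u) as T2.
  assert (HD : dot (vadd (vadd (vscal al (E1 u t)) (vscal be (E2 t))) (vscal ga (NN u t))) (NN u t) = ga).
  { unfold E1, E2, NN; vsimp. lc2 (- al * st u * ct u + ga * ct u ^ 2) T1 ga T2. }
  rewrite HD. unfold E1, E2, NN; apply vext; vsimp; ring.
Qed.

Lemma dsV_eq (Y : vfun) f g f' g' s t : II s ->
  (forall u w, II u -> Y u w = comb f g u w) -> is_derive f s f' -> is_derive g s g' ->
  dsV Y s t = vadd (vadd (vscal f' (E1 s t)) (vscal g' (E2 t))) (vscal (- f s / r) (NN s t)).
Proof.
  intros Hs HY Hf Hg. unfold dsV, ds. apply vext; vsimp.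
  - apply (Dloc _ (fun u => f u * (- st u * cos t) + g u * - sin t)); auto.
    intros w Hw; rewrite HY by auto; unfold comb, E1, E2; vsimp; ring.
    unfold st. auto_derive.
    split; [eexists; exact Hf | split; [eexists; exact Hg | exact I]].
    replace (Derive (fun y : R => f y) s) with f' by (symmetry; now apply is_derive_unique); replace (Derive (fun y : R => g y) s) with g' by (symmetry; now apply is_derive_unique).
    unfold E1, E2, NN, st, ct; vsimp; fr.
  - apply (Dloc _ (fun u => f u * (- st u * sin t) + g u * cos t)); auto.
    intros w Hw; rewrite HY by auto; unfold comb, E1, E2; vsimp; ring.
    unfold st. auto_derive.
    split; [eexists; exact Hf | split; [eexists; exact Hg | exact I]].
    replace (Derive (fun y : R => f y) s) with f' by (symmetry; now apply is_derive_unique); replace (Derive (fun y : R => g y) s) with g' by (symmetry; now apply is_derive_unique).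
    unfold E1, E2, NN, st, ct; vsimp; fr.
  - apply (Dloc _ (fun u => f u * ct u + g u * 0)); auto.
    intros w Hw; rewrite HY by auto; unfold comb, E1, E2; vsimp; ring.
    unfold ct. auto_derive.
    split; [eexists; exact Hf | split; [eexists; exact Hg | exact I]].
    replace (Derive (fun y : R => f y) s) with f' by (symmetry; now apply is_derive_unique); replace (Derive (fun y : R => g y) s) with g' by (symmetry; now apply is_derive_unique).
    unfold E1, E2, NN, st, ct; vsimp; fr.
Qed.

Lemma dtV_eq (Y : vfun) f g s t : II s ->
  (forall u w, II u -> Y u w = comb f g u w) ->
  dtV Y s t = vadd (vadd (vscal (g s * st s) (E1 s t)) (vscal (- f s * st s) (E2 t))) (vscal (- g s * ct s) (NN s t)).
Proof.
  intros Hs HY. pose proof (trigt t) as T1. unfold dtV, dt. apply vext; vsimp.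
  - rewrite (Derive_ext _ (fun w => f s * (- st s * cos w) + g s * - sin w)).
    2:{ intros w; rewrite HY by auto; unfold comb, E1, E2; vsimp; ring. }
    apply is_derive_unique. auto_derive; auto. unfold E1, E2, NN; vsimp. toR.
    lc (g s * cos t) (trig s).
  - rewrite (Derive_ext _ (fun w => f s * (- st s * sin w) + g s * cos w)).
    2:{ intros w; rewrite HY by auto; unfold comb, E1, E2; vsimp; ring. }
    apply is_derive_unique. auto_derive; auto. unfold E1, E2, NN; vsimp. toR.
    lc (g s * sin t) (trig s).
  - rewrite (Derive_ext _ (fun w => f s * ct s + g s * 0)).
    2:{ intros w; rewrite HY by auto; unfold comb, E1, E2; vsimp; ring. }
    rewrite Derive_const. unfold E1, E2, NN; vsimp. ring.
Qed.
Lemma NAB (P : tfield) (Y : vfun) f g f' g' s t : II s ->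
  (forall u w, II u -> Y u w = comb f g u w) -> is_derive f s f' -> is_derive g s g' ->
  nabla x z P Y s t =
  vadd (vscal (fst P s t * f' + snd P s t * g s * st s + f s * ct s * fst P s t) (E1 s t))
       (vscal (fst P s t * g' - snd P s t * f s * st s + f s * ct s * snd P s t * XX s) (E2 t)).
Proof.
  intros Hs HY Hf Hg. unfold nabla. rewrite tang_eq by auto. unfold derXV.
  rewrite (dsV_eq Y f g f' g' s t), (dtV_eq Y f g s t) by auto.
  unfold fieldV. rewrite psi_s_eq, psi_t_eq, xI, (HY s t) by auto.
  match goal with |- vsub ?V _ = _ =>
    replace V with (vadd (vadd (vscal (fst P s t * f' + snd P s t * g s * st s + f s * ct s * fst P s t) (E1 s t))
       (vscal (fst P s t * g' - snd P s t * f s * st s + f s * ct s * snd P s t * XX s) (E2 t)))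
       (vscal (- fst P s t * f s / r - snd P s t * g s * ct s) (NN s t))) end.
  apply proj_lem.
  unfold comb, Cz, E1, E2, NN; apply vext; vsimp; fr.
Qed.

Definition cmb (al be : R) (u t : R) := vadd (vscal al (E1 u t)) (vscal be (E2 t)).
Lemma cmb_sub al be ga de u t : vsub (cmb al be u t) (cmb ga de u t) = cmb (al - ga) (be - de) u t.
Proof. unfold cmb, E1, E2; apply vext; vsimp; ring. Qed.
Lemma cmb_dot al be ga de u t : dot (cmb al be u t) (cmb ga de u t) = al * ga + be * de.
Proof. pose proof (trigt t) as T1. pose proof (trig u) as T2.
  unfold cmb, E1, E2; vsimp. lc2 (al * ga * st u ^ 2 + be * de) T1 (al * ga) T2. Qed.
Lemma cmb_comb f g u t : comb f g u t = cmb (f u) (g u) u t.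
Proof. reflexivity. Qed.

Lemma XXne u : II u -> XX u <> 0.
Proof. intros H; pose proof (xpos u H); lra. Qed.

Lemma F1 u w : II u -> fieldV x z e1 u w = comb (fun _ => 1) (fun _ => 0) u w.
Proof. intros Hu. unfold fieldV, e1; cbn [fst snd]. rewrite psi_s_eq, psi_t_eq by auto.
  unfold comb, E1, E2; apply vext; vsimp; ring. Qed.
Lemma F2 u w : II u -> fieldV x z (e2 x) u w = comb (fun _ => 0) (fun _ => 1) u w.
Proof. intros Hu. pose proof (XXne u Hu). unfold fieldV, e2; cbn [fst snd]. rewrite psi_s_eq, psi_t_eq, xI by auto.
  unfold comb, E1, E2; apply vext; vsimp; field; auto. Qed.

Lemma dc (c : R) s : is_derive (fun _ : R => c) s 0.
Proof. auto_derive; auto. Qed.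

Lemma N22 u w : II u -> nabla x z (e2 x) (fieldV x z (e2 x)) u w = comb (fun v => st v / XX v) (fun _ => 0) u w.
Proof. intros Hu. pose proof (XXne u Hu).
  rewrite (NAB _ _ (fun _ => 0) (fun _ => 1) 0 0 u w Hu F2 (dc _ _) (dc _ _)).
  unfold e2, comb; cbn [fst snd]. rewrite xI by auto. f_equal; f_equal; field; auto. Qed.
Lemma N12 u w : II u -> nabla x z e1 (fieldV x z (e2 x)) u w = comb (fun _ => 0) (fun _ => 0) u w.
Proof. intros Hu. pose proof (XXne u Hu).
  rewrite (NAB _ _ (fun _ => 0) (fun _ => 1) 0 0 u w Hu F2 (dc _ _) (dc _ _)).
  unfold e1, comb; cbn [fst snd]. f_equal; f_equal; field; auto. Qed.
Lemma N11 u w : II u -> nabla x z e1 (fieldV x z e1) u w = comb ct (fun _ => 0) u w.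
Proof. intros Hu. pose proof (XXne u Hu).
  rewrite (NAB _ _ (fun _ => 1) (fun _ => 0) 0 0 u w Hu F1 (dc _ _) (dc _ _)).
  unfold e1, comb; cbn [fst snd]. f_equal; f_equal; field; auto. Qed.
Lemma N21 u w : II u -> nabla x z (e2 x) (fieldV x z e1) u w = comb (fun _ => 0) (fun v => ct v - st v / XX v) u w.
Proof. intros Hu. pose proof (XXne u Hu).
  rewrite (NAB _ _ (fun _ => 1) (fun _ => 0) 0 0 u w Hu F1 (dc _ _) (dc _ _)).
  unfold e2, comb; cbn [fst snd]. rewrite xI by auto. f_equal; f_equal; field; auto. Qed.

Lemma dinvX s : II s -> is_derive (fun v => / XX v) s (st s / XX s ^ 2).
Proof. intros Hs. pose proof (XXne s Hs). unfold XX, ct, st in *. auto_derive.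
  unfold Rdiv; auto. toR. unfold Rdiv in *. field. split; auto; lra. Qed.
Lemma dA s : II s -> is_derive (fun v => st v / XX v) s (ct s / (r * XX s) + st s ^ 2 / XX s ^ 2).
Proof. intros Hs. pose proof (XXne s Hs). unfold XX, ct, st in *. auto_derive.
  unfold Rdiv; auto. toR. unfold Rdiv in *. field. split; auto; lra. Qed.
Lemma dB s : II s -> is_derive (fun v => ct v - st v / XX v) s (- st s / r - ct s / (r * XX s) - st s ^ 2 / XX s ^ 2).
Proof. intros Hs. pose proof (XXne s Hs). unfold XX, ct, st in *. auto_derive.
  unfold Rdiv; auto. toR. unfold Rdiv in *. field. split; auto; lra. Qed.

Lemma br12 s t : II s -> fst (Defs.bracket e1 (e2 x)) s t = 0 /\ snd (Defs.bracket e1 (e2 x)) s t = st s / XX s ^ 2.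
Proof. intros Hs. unfold Defs.bracket, derX, ds, dt, e1, e2; cbn [fst snd]. rewrite !Derive_const. split. ring.
  rewrite (Dloc (fun u => / x u) (fun v => / XX v) s _ Hs (fun u Hu => f_equal Rinv (xI u Hu)) (dinvX s Hs)). ring. Qed.
Lemma br21 s t : II s -> fst (Defs.bracket (e2 x) e1) s t = 0 /\ snd (Defs.bracket (e2 x) e1) s t = - (st s / XX s ^ 2).
Proof. intros Hs. unfold Defs.bracket, derX, ds, dt, e1, e2; cbn [fst snd]. rewrite !Derive_const. split. ring.
  rewrite (Dloc (fun u => / x u) (fun v => / XX v) s _ Hs (fun u Hu => f_equal Rinv (xI u Hu)) (dinvX s Hs)). ring. Qed.

Lemma R122 s t : II s -> Rcurv x z e1 (e2 x) (e2 x) s t = cmb (ct s / (r * XX s) + st s * ct s / XX s) 0 s t.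
Proof. intros Hs. pose proof (XXne s Hs). unfold Rcurv.
  rewrite (NAB e1 (nabla x z (e2 x) (fieldV x z (e2 x))) (fun v => st v / XX v) (fun _ => 0) _ 0 s t Hs N22 (dA s Hs) (dc 0 s)).
  rewrite (NAB (e2 x) (nabla x z e1 (fieldV x z (e2 x))) (fun _ => 0) (fun _ => 0) 0 0 s t Hs N12 (dc 0 s) (dc 0 s)).
  rewrite (NAB (Defs.bracket e1 (e2 x)) (fieldV x z (e2 x)) (fun _ => 0) (fun _ => 1) 0 0 s t Hs F2 (dc 0 s) (dc 1 s)).
  destruct (br12 s t Hs) as [B1 B2]; rewrite B1, B2. unfold e1, e2; cbn [fst snd]. rewrite xI by auto.
  unfold cmb, E1, E2; apply vext; vsimp; fr.
Qed.
Lemma R211 s t : II s -> Rcurv x z (e2 x) e1 e1 s t = cmb 0 (ct s ^ 2 + st s / r + ct s / (r * XX s)) s t.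
Proof. intros Hs. pose proof (XXne s Hs). unfold Rcurv.
  rewrite (NAB (e2 x) (nabla x z e1 (fieldV x z e1)) ct (fun _ => 0) _ 0 s t Hs N11 (d_ct s) (dc 0 s)).
  rewrite (NAB e1 (nabla x z (e2 x) (fieldV x z e1)) (fun _ => 0) (fun v => ct v - st v / XX v) 0 _ s t Hs N21 (dc 0 s) (dB s Hs)).
  rewrite (NAB (Defs.bracket (e2 x) e1) (fieldV x z e1) (fun _ => 1) (fun _ => 0) 0 0 s t Hs F1 (dc 1 s) (dc 0 s)).
  destruct (br21 s t Hs) as [B1 B2]; rewrite B1, B2. unfold e1, e2; cbn [fst snd]. rewrite xI by auto.
  unfold cmb, E1, E2; apply vext; vsimp; fr.
Qed.

Definition KK (s : R) := ct s / (r * XX s) + st s * ct s / (2 * XX s) + ct s ^ 2 / 2 + st s / (2 * r).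

Lemma sect_eq s t : II s -> sect_curv x z s t = KK s.
Proof. intros Hs. pose proof (XXne s Hs). unfold sect_curv.
  rewrite R122, R211, F1, F2, !cmb_comb, !cmb_dot by auto. unfold KK. fr. Qed.

Record TC := mkTC { A0 : R; A1 : R; B1 : R; A2 : R; B2 : R; A3 : R; B3 : R }.
Definition tpv (c : TC) (s : R) : R :=
  A0 c + A1 c * cos (s / r) + B1 c * sin (s / r) + A2 c * cos (2 * (s / r)) + B2 c * sin (2 * (s / r))
  + A3 c * cos (3 * (s / r)) + B3 c * sin (3 * (s / r)).
Definition dv (c : TC) : TC :=
  mkTC 0 (B1 c / r) (- A1 c / r) (2 * B2 c / r) (- 2 * A2 c / r) (3 * B3 c / r) (- 3 * A3 c / r).

Lemma tp_der c s : is_derive (tpv c) s (tpv (dv c) s).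
Proof. unfold tpv, dv. auto_derive; auto. cbn [A0 A1 B1 A2 B2 A3 B3]. fr. Qed.

Lemma zero_der c : (forall s, II s -> tpv c s = 0) -> forall s, II s -> tpv (dv c) s = 0.
Proof. intros H s Hs. rewrite <- (is_derive_unique _ _ _ (tp_der c s)).
  apply (Dloc _ (fun _ => 0)); auto. apply (dc 0 s). Qed.

Lemma notzero c s : A3 c <> 0 -> B3 c = 0 -> (forall s, II s -> tpv c s = 0) -> II s -> False.
Proof. intros HA HB H Hs.
  assert (H1 := zero_der _ H).
  assert (H2 := zero_der _ H1).
  assert (H3 := zero_der _ H2).
  assert (H4 := zero_der _ H3).
  assert (H5 := zero_der _ H4).
  assert (H6 := zero_der _ H5).
  specialize (H1 s Hs). specialize (H2 s Hs). specialize (H3 s Hs).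
  specialize (H4 s Hs). specialize (H5 s Hs). specialize (H6 s Hs).
  unfold tpv, dv in *; cbn [A0 A1 B1 A2 B2 A3 B3] in *.
  destruct c as [a0 a1 b1 a2 b2 a3 b3]; cbn [A0 A1 B1 A2 B2 A3 B3] in *. subst b3.
  pose proof Hr as Hr'.
  assert (S3 : sin (3 * (s / r)) = 0).
  { match type of H1 with ?L1 = _ => match type of H3 with ?L3 = _ => match type of H5 with ?L5 = _ =>
    assert (E : - 120 * a3 / r ^ 5 * sin (3 * (s / r)) = L5 + 5 / r ^ 2 * L3 + 4 / r ^ 4 * L1) end end end.
    { field. lra. }
    rewrite H1, H3, H5 in E.
    assert (E' : a3 * sin (3 * (s / r)) = 0).
    { apply (Rmult_eq_reg_l (- 120 / r ^ 5)). replace (- 120 / r ^ 5 * (a3 * sin (3 * (s / r)))) with (- 120 * a3 / r ^ 5 * sin (3 * (s / r))) by (field; lra). rewrite E; ring.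
      unfold Rdiv. apply Rmult_integral_contrapositive_currified. lra. apply Rinv_neq_0_compat. apply pow_nonzero. lra. }
    destruct (Rmult_integral _ _ E'); tauto. }
  assert (C3 : cos (3 * (s / r)) = 0).
  { match type of H2 with ?L1 = _ => match type of H4 with ?L3 = _ => match type of H6 with ?L5 = _ =>
    assert (E : - 360 * a3 / r ^ 6 * cos (3 * (s / r)) = L5 + 5 / r ^ 2 * L3 + 4 / r ^ 4 * L1) end end end.
    { field. lra. }
    rewrite H2, H4, H6 in E.
    assert (E' : a3 * cos (3 * (s / r)) = 0).
    { apply (Rmult_eq_reg_l (- 360 / r ^ 6)). replace (- 360 / r ^ 6 * (a3 * cos (3 * (s / r)))) with (- 360 * a3 / r ^ 6 * cos (3 * (s / r))) by (field; lra). rewrite E; ring.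
      unfold Rdiv. apply Rmult_integral_contrapositive_currified. lra. apply Rinv_neq_0_compat. apply pow_nonzero. lra. }
    destruct (Rmult_integral _ _ E'); tauto. }
  pose proof (trigt (3 * (s / r))). rewrite S3, C3 in H0. lra.
Qed.

Hypothesis Hab : Rbar_lt a b.
Lemma exI : exists s, II s.
Proof. unfold II. destruct a as [a'| |], b as [b'| |]; simpl in *; try tauto.
  - exists ((a' + b') / 2); simpl; lra.
  - exists (a' + 1); simpl; lra.
  - exists (b' - 1); simpl; lra.
  - exists 0; simpl; auto.
Qed.

Lemma final : ~ exists k, forall s t : R, Rbar_lt a s -> Rbar_lt s b -> sect_curv x z s t = k.
Proof. intros [k Hk]. destruct exI as [s0 Hs0].
  apply (notzero (mkTC (r*c1/2 - 2*r*k*c1) (3*r^2/4 + 2 - 2*r^2*k) c1 (r*c1/2) r (r^2/4) 0) s0); cbn [A3 B3]; auto.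
  { intro H; assert (r ^ 2 = 0) by lra. apply (pow_nonzero r 2); lra. }
  intros s Hs. pose proof (XXne s Hs).
  assert (HK : KK s = k). { rewrite <- (sect_eq s 0 Hs). destruct Hs; now apply Hk. }
  transitivity (2 * r * XX s * (KK s - k)); [| rewrite HK; ring].
  assert (HG : 2 * r * XX s * KK s = 2 * ct s + r * st s * ct s + r * ct s ^ 2 * XX s + st s * XX s).
  { unfold KK. field. split; auto; lra. }
  replace (2 * r * XX s * (KK s - k)) with (2 * r * XX s * KK s - 2 * r * k * XX s) by ring.
  rewrite HG. pose proof (trig s) as T. unfold tpv, XX, ct, st in *; cbn [A0 A1 B1 A2 B2 A3 B3].
  replace (3 * (s / r)) with (2 * (s / r) + s / r) by ring.
  rewrite cos_plus, sin_plus, !cos_2a, !sin_2a.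
  unfold Rdiv in *. assert (T0 : cos (s * / r) ^ 2 + sin (s * / r) ^ 2 - 1 = 0) by (rewrite T; ring). match goal with |- ?L = ?RR => transitivity (RR + (- (r * c1 * / 2 + 3 * r ^ 2 * cos (s * / r) * / 4)) * (cos (s * / r) ^ 2 + sin (s * / r) ^ 2 - 1)) end. field. rewrite T0. ring.
Qed.
End S.

Theorem theorem4p4 (a b : Rbar) (x z : R -> R) (c1 c2 r : R) :
  Rbar_lt a b ->
  0 < r ->
  (forall s : R, Rbar_lt a s -> Rbar_lt s b ->
     x s = c1 + r * cos (s / r) /\ z s = c2 + r * sin (s / r) /\ 0 < x s) ->
  ~ (exists k : R, forall s t : R, Rbar_lt a s -> Rbar_lt s b ->
       sect_curv x z s t = k).
Proof. intros Hab Hr Hx. exact (final a b x z c1 c2 r Hr Hx Hab). Qed.
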